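(* Let $X=\{a,\dots,b\}\subseteq\mathbb{N}$, let $f^\alpha:\mathcal{P}^n\to X$ be a median voter scheme with fixed ballots $\alpha_1\le\dots\le\alpha_{n-1}$ in $X$, and let $i\in N$. Then $x\in V_i$ if and only if $x<\alpha_1$ or $x>\alpha_{n-1}$.
   Context: $N=\{1,\dots,n\}$, $n\ge2$; $X=\{a,a+1,\dots,b\}$, $|X|\ge2$; $\mathcal{P}$ all strict linear orders on $X$; $t(P_i)$ the top of $P_i$. $f^\alpha(P)=\mathrm{med}\{t(P_1),\dots,t(P_n),\alpha_1,\dots,\alpha_{n-1}\}$. Option set $O(P_i)=\{f^\alpha(P_i,P_{-i}):P_{-i}\in\mathcal{P}^{n-1}\}$. Agent $i$ vetoes $x$ via $P_i$ if $x\notin O(P_i)$; $V_i$ is the set of alternatives that $i$ vetoes via some preference $P_i\in\mathcal{P}$. *)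

(* Defs.v *)
From mathcomp Require Import all_boot.
Set Implicit Arguments. Unset Strict Implicit. Unset Printing Implicit Defensive.

Definition alts (a b : nat) : seq nat := iota a (b - a).+1.
Definition inX (a b x : nat) : bool := (a <= x) && (x <= b).

(* A strict linear order on X is represented by the ranking list of X from
   best to worst: a duplicate-free enumeration of X (a permutation of X). *)
Definition is_pref (a b : nat) (P : seq nat) : bool := perm_eq P (alts a b).

Definition top (a : nat) (P : seq nat) : nat := head a P.

Definition med (s : seq nat) : nat := nth 0 (sort leq s) (size s)./2.

Definition mvs (a n : nat) (alpha : seq nat) (P : 'I_n -> seq nat) : nat :=
  med ([seq top a (P j) | j <- enum 'I_n] ++ alpha).

Definition is_profile (a b n : nat) (P : 'I_n -> seq nat) : Prop :=
  forall j, is_pref a b (P j).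

Definition in_option_set (a b n : nat) (alpha : seq nat) (i : 'I_n)
    (Pi : seq nat) (x : nat) : Prop :=
  exists P : 'I_n -> seq nat,
    is_profile a b P /\ P i = Pi /\ mvs a alpha P = x.

Definition vetoes (a b n : nat) (alpha : seq nat) (i : 'I_n) (x : nat) : Prop :=
  exists Pi : seq nat, is_pref a b Pi /\ ~ in_option_set a b alpha i Pi x.

(* Main.v *)
Require Import Defs.
From mathcomp Require Import all_boot.
From mathcomp Require Import zify.

Lemma count_sort (p : pred nat) s : count p (sort leq s) = count p s.
Proof. by apply/permP; rewrite perm_sort. Qed.

Lemma med_ge s k v : k < size s -> count (fun y => y < v) s <= k ->
  v <= nth 0 (sort leq s) k.
Proof.
move=> ks hc; rewrite leqNgt; apply/negP => hlt.
set t := sort leq s.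
have st : sorted leq t by apply: sort_sorted; exact: leq_total.
have kt : k < size t by rewrite size_sort.
have : count (fun y => y < v) (take k.+1 t) = k.+1.
  rewrite -{2}[k.+1](size_takel (s:=t)) //.
  apply/eqP; rewrite -all_count; apply/(all_nthP 0) => j.
  rewrite size_takel // => jk; rewrite nth_take //.
  apply: leq_ltn_trans hlt; apply: (sorted_leq_nth leq_trans leqnn) => //.
  by rewrite inE; apply: leq_ltn_trans kt.
have := count_cat (fun y => y < v) (take k.+1 t) (drop k.+1 t).
rewrite cat_take_drop count_sort; lia.
Qed.

Lemma med_le s k v : k < size s -> count (fun y => v < y) s <= size s - k.+1 ->
  nth 0 (sort leq s) k <= v.
Proof.
move=> ks hc; rewrite leqNgt; apply/negP => hlt.
set t := sort leq s.
have st : sorted leq t by apply: sort_sorted; exact: leq_total.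
have kt : k < size t by rewrite size_sort.
have : count (fun y => v < y) (drop k t) = size s - k.
  have -> : size s - k = size (drop k t) by rewrite size_drop size_sort.
  apply/eqP; rewrite -all_count; apply/(all_nthP 0) => j.
  rewrite size_drop => jk; rewrite nth_drop.
  apply: leq_trans hlt _; apply: (sorted_leq_nth leq_trans leqnn) => //;
   rewrite ?inE /=; rewrite /t ?size_sort in jk *; lia.
have := count_cat (fun y => v < y) (take k t) (drop k t).
rewrite cat_take_drop count_sort; lia.
Qed.

Lemma half_lem n : 0 < n -> (n + n.-1)./2 = n.-1.
Proof.
case: n => // m _; rewrite addSn -/(m.+1.-1) /= addnn.
by rewrite uphalf_double.
Qed.

Lemma count_enum_le1 n (i : 'I_n) (q : pred 'I_n) :
  (forall j, q j -> j = i) -> count q (enum 'I_n) <= 1.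
Proof.
move=> h; apply: leq_trans (sub_count (a2 := pred1 i) _ _) _.
  by move=> j /h ->; rewrite /= eqxx.
by rewrite count_uniq_mem ?enum_uniq // leq_b1.
Qed.

Lemma count_enum_not n (i : 'I_n) (q : pred 'I_n) :
  ~~ q i -> count q (enum 'I_n) <= n.-1.
Proof.
move=> h; apply: leq_trans (sub_count (a2 := predC1 i) _ _) _.
  by move=> j qj /=; apply/eqP => eji; move: h; rewrite -eji qj.
have := count_predC (pred1 i) (enum 'I_n).
rewrite count_uniq_mem ?enum_uniq // mem_enum size_enum_ord.
have -> : count (predC (pred1 i)) (enum 'I_n) = count (predC1 i) (enum 'I_n) by [].
have -> : (i \in 'I_n) = true by []. lia.
Qed.

Lemma pref_top a b y : inX a b y ->
  is_pref a b (y :: rem y (alts a b)) /\ top a (y :: rem y (alts a b)) = y.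
Proof.
move=> /andP[h1 h2]; split => //.
rewrite /is_pref perm_sym; apply: perm_to_rem.
rewrite /alts mem_iota; lia.
Qed.

Lemma alpha_bounds n (alpha : seq nat) y : 2 <= n -> size alpha = n.-1 ->
  sorted leq alpha -> y \in alpha ->
  nth 0 alpha 0 <= y <= nth 0 alpha n.-2.
Proof.
move=> hn hs so /(nthP 0) [j hj <-].
have H := sorted_leq_nth leq_trans leqnn 0 so.
rewrite !H // ?inE /=; try lia; rewrite hs in hj; move: hj hn; clear; case: n => [|[|m]] //=; lia.
Qed.

Theorem lemma1 (a b n : nat) (alpha : seq nat) (i : 'I_n) (x : nat) :
  a < b -> 2 <= n ->
  size alpha = n.-1 -> sorted leq alpha -> all (inX a b) alpha ->
  inX a b x ->
  vetoes a b alpha i x <-> (x < nth 0 alpha 0 \/ x > nth 0 alpha n.-2).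
Proof.
move=> hab hn hs so hall hx.
set a0 := nth 0 alpha 0; set al := nth 0 alpha n.-2.
have bnd : forall y, y \in alpha -> a0 <= y <= al.
  by move=> y; apply: alpha_bounds.
have a0in : a0 \in alpha by apply: mem_nth; rewrite hs; lia.
have alin : al \in alpha by apply: mem_nth; rewrite hs; lia.
have a0X : inX a b a0 by apply: (allP hall).
have alX : inX a b al by apply: (allP hall).
have sizeL : forall P : 'I_n -> seq nat,
    size ([seq top a (P j) | j <- enum 'I_n] ++ alpha) = n + n.-1.
  by move=> P; rewrite size_cat size_map size_enum_ord hs.
have hk : (n + n.-1)./2 = n.-1 by apply: half_lem; lia.
have cnt0 : forall p : pred nat, (forall z, z \in alpha -> ~~ p z) -> count p alpha <= 0.
  move=> p hp; rewrite leqNgt -has_count; apply/hasPn => z; exact: hp.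
have cnt1 : forall (p : pred nat) z, z \in alpha -> ~~ p z -> count p alpha <= n.-2.
  move=> p z zin pz; have := count_predC p alpha.
  have : 0 < count (predC p) alpha by rewrite -has_count; apply/hasP; exists z.
  rewrite hs; lia.
split.
- move=> [Pi [hPi hnot]].
  case: (ltnP x a0) => [h|h]; first by left.
  case: (ltnP al x) => [h'|h']; first by right.
  exfalso; apply: hnot.
  have [pPx tPx] := @pref_top a b x hx.
  exists (fun j => if j == i then Pi else x :: rem x (alts a b)).
  split; first by move=> j; case: eqP.
  split; first by rewrite eqxx.
  rewrite /mvs /med sizeL hk; apply/eqP; rewrite eqn_leq; apply/andP; split.
  + apply: med_le; first by rewrite sizeL; lia.
    rewrite sizeL count_cat count_map.
    apply: (@leq_trans (1 + n.-2)); last by lia.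
    apply: leq_add.
      apply: (@count_enum_le1 n i) => j /=; case: eqP => // _; by rewrite tPx ltnn.
    apply: (cnt1 _ a0) => //=; rewrite -leqNgt; exact: h.
  + apply: med_ge; first by rewrite sizeL; lia.
    rewrite count_cat count_map.
    apply: (@leq_trans (1 + n.-2)); last by lia.
    apply: leq_add.
      apply: (@count_enum_le1 n i) => j /=; case: eqP => // _; by rewrite tPx ltnn.
    apply: (cnt1 _ al) => //=; rewrite -leqNgt; exact: h'.
- case=> h.
  + have bX : inX a b b by rewrite /inX; apply/andP; lia.
    have [pb tb] := @pref_top a b b bX.
    exists (b :: rem b (alts a b)); split => //.
    move=> [P [hP [hPi hm]]].
    have : a0 <= mvs a alpha P.
      rewrite /mvs /med sizeL hk; apply: med_ge; first by rewrite sizeL; lia.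
      rewrite count_cat count_map.
      apply: (@leq_trans (n.-1 + 0)); last by lia.
      apply: leq_add.
        apply: (@count_enum_not n i) => /=; rewrite hPi tb -leqNgt.
        by case/andP: a0X.
      apply: cnt0 => z /bnd /andP[z1 _] /=; rewrite -leqNgt; exact: z1.
    rewrite hm; lia.
  + have aX : inX a b a by rewrite /inX; apply/andP; lia.
    have [pa ta] := @pref_top a b a aX.
    exists (a :: rem a (alts a b)); split => //.
    move=> [P [hP [hPi hm]]].
    have : mvs a alpha P <= al.
      rewrite /mvs /med sizeL hk; apply: med_le; first by rewrite sizeL; lia.
      rewrite sizeL count_cat count_map.
      apply: (@leq_trans (n.-1 + 0)); last by lia.
      apply: leq_add.
        apply: (@count_enum_not n i) => /=; rewrite hPi ta -leqNgt.
        by case/andP: alX.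
      apply: cnt0 => z /bnd /andP[_ z1] /=; rewrite -leqNgt; exact: z1.
    rewrite hm; lia.
Qed.
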